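(* Let $X=(X_n)_{n\in\mathbb{Z}}$ be a stationary and ergodic sequence of integer-valued random variables, and let $\mathbb{Z}^R_X(0)$ be the connected component of $0$ in the record graph of $X$. Then $\mathbb{P}[\mathbb{Z}^R_X(0)\text{ is of class }\mathcal{I}/\mathcal{I}]\in\{0,1\}$ and $\mathbb{P}[\mathbb{Z}^R_X(0)\text{ is of class }\mathcal{I}/\mathcal{F}]\in\{0,1\}$.
   Context: For a sequence $x=(x_n)_{n\in\mathbb{Z}}$ write $y(j,k)=\sum_{l=j}^{k-1}x_l$ for $j<k$. The record map is $R_x(i)=\inf\{n>i: y(i,n)\ge0\}$ if this set is nonempty, and $R_x(i)=i$ otherwise. The record graph has vertex set $\mathbb{Z}$ and an edge $i\to R_x(i)$ whenever $R_x(i)\ne i$; components are in the undirected sense. For a component $C$, $u,v\in C$ lie in the same foil if $R_x^n(u)=R_x^n(v)$ for some $n\ge1$. $C$ is of class $\mathcal{I}/\mathcal{I}$ if it is infinite and all foils are infinite, and of class $\mathcal{I}/\mathcal{F}$ if it is infinite and all foils are finite. *)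

(* Defs.v *)
From HB Require Import structures.
From mathcomp Require Import all_boot all_order all_algebra.
From mathcomp Require Import all_classical all_reals all_analysis.
From Stdlib Require Import Relations.
Set Implicit Arguments. Unset Strict Implicit. Unset Printing Implicit Defensive.
Import Order.TTheory GRing.Theory Num.Theory.
Local Open Scope classical_set_scope.
Local Open Scope ring_scope.

(* y(j,k) = sum_{l=j}^{k-1} x_l  (meaningful for j < k). *)
Definition ysum (x : int -> int) (j k : int) : int :=
  \sum_(0 <= t < `|k - j|%N) x (j + t%:Z).

Definition first_record (x : int -> int) (i n : int) : Prop :=
  i < n /\ 0 <= ysum x i n /\ forall m, i < m -> m < n -> ysum x i m < 0.

(* Record map: R_x(i) = inf {n > i : y(i,n) >= 0} if nonempty, else i. *)
Definition recmap (x : int -> int) (i : int) : int :=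
  xget i [set n | first_record x i n].

Definition rec_adj (x : int -> int) (u v : int) : Prop :=
  (recmap x u <> u /\ recmap x u = v) \/ (recmap x v <> v /\ recmap x v = u).

Definition component (x : int -> int) (u : int) : set int :=
  [set v | clos_refl_trans int (rec_adj x) u v].

Definition foil (x : int -> int) (u : int) : set int :=
  [set v | component x u v /\
           exists n : nat, (0 < n)%N /\ iter n (recmap x) u = iter n (recmap x) v].

Definition class_II (x : int -> int) (c : int) : Prop :=
  infinite_set (component x c) /\
  forall u, component x c u -> infinite_set (foil x u).

Definition class_IF (x : int -> int) (c : int) : Prop :=
  infinite_set (component x c) /\
  forall u, component x c u -> finite_set (foil x u).

Definition cylinders : set (set (int -> int)) :=
  [set A | exists (n a : int), A = [set x | x n = a]].

Definition seq_measurable (A : set (int -> int)) : Prop :=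
  <<s cylinders >> A.

Definition shift (x : int -> int) : int -> int := fun n => x (n + 1).

Section Proc.
Context (R : realType) (d : measure_display) (T : measurableType d)
        (P : probability T R).

Definition int_process (X : T -> int -> int) : Prop :=
  forall n a : int, measurable [set w | X w n = a].

Definition stationary (X : T -> int -> int) : Prop :=
  forall A, seq_measurable A ->
    P (X @^-1` (shift @^-1` A)) = P (X @^-1` A).

Definition ergodic (X : T -> int -> int) : Prop :=
  forall A, seq_measurable A -> shift @^-1` A = A ->
    P (X @^-1` A) = 0%E \/ P (X @^-1` A) = 1%E.
End Proc.

(* Main.v *)
Require Import Defs.
From HB Require Import structures.
From mathcomp Require Import all_boot all_order all_algebra.
From mathcomp Require Import all_classical all_reals all_analysis.
From mathcomp Require Import zify.
From Stdlib Require Import Relations.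
Set Implicit Arguments. Unset Strict Implicit. Unset Printing Implicit Defensive.
Import Order.TTheory GRing.Theory Num.Theory.
Local Open Scope classical_set_scope.
Local Open Scope ring_scope.

Lemma ysum_split (x : int -> int) i k n : i <= k -> k <= n ->
  ysum x i n = ysum x i k + ysum x k n.
Proof.
move=> ik kn; rewrite /ysum.
have -> : `|n - i|%N = (`|k - i| + `|n - k|)%N by lia.
rewrite (big_cat_nat _ (n:=`|k - i|%N)) //=; last by rewrite leq_addr.
congr (_ + _).
rewrite -{1}(add0n `|k - i|%N) big_addn. have -> : (`|k - i| + `|n - k| - `|k - i|)%N = `|n - k|%N by lia. apply: eq_bigr => t _.
congr x; lia.
Qed.
Lemma ysum_shift (x : int -> int) i n : ysum (Defs.shift x) i n = ysum x (i + 1) (n + 1).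
Proof.
rewrite /ysum /Defs.shift.
have -> : absz (n + 1 - (i + 1))%R = absz (n - i)%R by congr absz; lia.
apply: eq_bigr => t _; congr x; lia.
Qed.

Definition root (x : int -> int) (i : int) : Prop := forall n, i < n -> ysum x i n < 0.

Lemma first_record_uniq x i n n' : first_record x i n -> first_record x i n' -> n = n'.
Proof.
move=> [h1 [h2 h3]] [h1' [h2' h3']].
case: (ltgtP n n') => // c.
- by have := h3' n h1 c; rewrite ltNge h2.
- by have := h3 n' h1' c; rewrite ltNge h2'.
Qed.

Lemma recmap_first x i n : first_record x i n -> recmap x i = n.
Proof.
move=> h; rewrite /recmap.
case: xgetP => [y -> hy|hn]; first exact: first_record_uniq hy h.
by exfalso; apply: (hn n).
Qed.

Lemma recmap_root x i : root x i -> recmap x i = i.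
Proof.
move=> h; rewrite /recmap.
case: xgetP => [y _ [hy [hy2 _]]|//].
by have := h y hy; rewrite ltNge hy2.
Qed.

Lemma root_or_first x i : root x i \/ first_record x i (recmap x i).
Proof.
have [h|h] := pselect (root x i); first by left.
right.
have [n hn] : exists n : nat, (0 <= ysum x i (i + n.+1%:Z)).
  apply: contra_notP h => hn m im.
  have -> : m = i + (`|m - i|.-1).+1%:Z by lia.
  rewrite ltNge; apply/negP => c; apply: hn; by exists (`|m - i|.-1).
pose P := fun k : nat => 0 <= ysum x i (i + k.+1%:Z).
have hP : exists k, P k by exists n.
pose m := ex_minn hP.
have hm : 0 <= ysum x i (i + m.+1%:Z) by rewrite /m; case: ex_minnP.
have hmin : forall k : nat, 0 <= ysum x i (i + k.+1%:Z) -> (m <= k)%N.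
  by rewrite /m; case: ex_minnP.
suff h' : first_record x i (i + m.+1%:Z) by rewrite (recmap_first h').
split; first lia.
split => // k ik km.
rewrite ltNge; apply/negP => c.
have := hmin `|k - i|.-1; have -> : i + (`|k - i|.-1).+1%:Z = k by lia.
move=> /(_ c); lia.
Qed.

Lemma recmap_ge x i : i <= recmap x i.
Proof.
by case: (root_or_first x i) => [/recmap_root ->|[]/ltW].
Qed.

Lemma recmap_fix x i : recmap x i = i <-> root x i.
Proof.
split; last exact: recmap_root.
move=> e; case: (root_or_first x i) => // -[]; rewrite e; by rewrite ltxx.
Qed.

Lemma recmap_gt x i : recmap x i <> i -> first_record x i (recmap x i).
Proof. by move=> h; case: (root_or_first x i) => // /recmap_root. Qed.

Lemma nest x i k : recmap x i <> i -> i < k -> k < recmap x i ->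
  k < recmap x k /\ recmap x k <= recmap x i.
Proof.
move=> /recmap_gt [h1 [h2 h3]] ik kr.
have hk : 0 < ysum x k (recmap x i).
  have := ysum_split x (ltW ik) (ltW kr).
  have := h3 k ik kr; lia.
have nr : ~ root x k by move=> /(_ (recmap x i) kr); lia.
have [k1 [k2 k3]] : first_record x k (recmap x k).
  by case: (root_or_first x k).
split => //; rewrite leNgt; apply/negP => c.
by have := k3 _ kr c; lia.
Qed.

Definition meet x u v := exists m n : nat, iter m (recmap x) u = iter n (recmap x) v.

Lemma meet_trans x u v w : meet x u v -> meet x v w -> meet x u w.
Proof.
move=> [a [b h1]] [c [d h2]]; exists (c + a)%N, (b + d)%N.
by rewrite !iterD h1 -!iterD addnC iterD h2 -iterD.
Qed.

Lemma meet_sym x u v : meet x u v -> meet x v u.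
Proof. by move=> [a [b h]]; exists b, a. Qed.

Lemma comp_meet x u v : component x u v -> meet x u v.
Proof.
elim => {u v} [u v [[_ h]|[_ h]]|u|u v w _ h1 _ h2].
- by exists 1%N, 0%N.
- by exists 0%N, 1%N.
- by exists 0%N, 0%N.
- exact: meet_trans h1 h2.
Qed.

Lemma comp_trans x u v w : component x u v -> component x v w -> component x u w.
Proof. exact: rt_trans. Qed.

Lemma comp_sym x u v : component x u v -> component x v u.
Proof.
elim => {u v} [u v h|u|u v w _ h1 _ h2].
- by apply: rt_step; move: h; rewrite /rec_adj; tauto.
- exact: rt_refl.
- exact: rt_trans h2 h1.
Qed.

Lemma comp_iter x u m : component x u (iter m (recmap x) u).
Proof.
elim: m => [|m IH]; first exact: rt_refl.
apply: (rt_trans _ _ _ _ _ IH) => /=.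
set w := iter m (recmap x) u.
have [e|ne] := pselect (recmap x w = w); first by rewrite e; exact: rt_refl.
by apply: rt_step; left.
Qed.

Lemma componentE x u v : component x u v <-> meet x u v.
Proof.
split; first exact: comp_meet.
move=> [m [n h]]; apply: (comp_trans (comp_iter x u m)); rewrite h.
exact/comp_sym/comp_iter.
Qed.

Lemma comp_eq x c c' : component x c c' -> component x c = component x c'.
Proof.
move=> h; apply/seteqP; split => v hv.
- exact: comp_trans (comp_sym h) hv.
- exact: comp_trans h hv.
Qed.

Lemma root_shift x i : root (Defs.shift x) i <-> root x (i + 1).
Proof.
split => h n hn.
- have := h (n - 1); rewrite ysum_shift subrK; apply; lia.
- rewrite ysum_shift; apply: h; lia.
Qed.

Lemma recmap_shift x i : recmap (Defs.shift x) i = recmap x (i + 1) - 1.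
Proof.
case: (root_or_first x (i + 1)) => [h|[h1 [h2 h3]]].
- rewrite (recmap_root h) addrK; apply: recmap_root; exact/root_shift.
- apply: recmap_first; split; first lia.
  split; first by rewrite ysum_shift subrK.
  move=> m im mr; rewrite ysum_shift; apply: h3; lia.
Qed.

Lemma iter_shift x m u : iter m (recmap (Defs.shift x)) u = iter m (recmap x) (u + 1) - 1.
Proof.
elim: m => [|m IH] /=; first by rewrite addrK.
by rewrite IH recmap_shift subrK.
Qed.

Lemma meet_shift x u v : meet (Defs.shift x) u v <-> meet x (u + 1) (v + 1).
Proof.
split => -[m [n h]]; exists m, n.
- by move: h; rewrite !iter_shift => /(congr1 (fun z => z + 1)); rewrite !subrK.
- by rewrite !iter_shift h.
Qed.

Lemma comp_shift x u v : component (Defs.shift x) u v <-> component x (u + 1) (v + 1).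
Proof. by rewrite !componentE meet_shift. Qed.

Lemma foil_shift x u v : foil (Defs.shift x) u v <-> foil x (u + 1) (v + 1).
Proof.
rewrite /foil /= comp_shift; split => -[h [n [n0 e]]]; split => //; exists n; split => //.
- by move: e; rewrite !iter_shift => /(congr1 (fun z => z + 1)); rewrite !subrK.
- by rewrite !iter_shift e.
Qed.

Lemma finite_transl (S : set int) a : finite_set [set v | S (v + a)] <-> finite_set S.
Proof.
split => h.
- have -> : S = (fun v => v + a) @` [set v | S (v + a)].
    apply/seteqP; split => v.
    + by move=> Sv; exists (v - a) => //=; rewrite subrK.
    + by move=> [w /= hw <-].
  exact: finite_image.
- have -> : [set v | S (v + a)] = (fun v => v - a) @` S.
    apply/seteqP; split => v.
    + by move=> Sv; exists (v + a) => //=; rewrite addrK.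
    + by move=> [w /= hw <-]; rewrite subrK.
  exact: finite_image.
Qed.

Definition Pf (b : bool) (S : set int) : Prop := if b then infinite_set S else finite_set S.

Lemma Pf_transl b (S : set int) a : Pf b [set v | S (v + a)] <-> Pf b S.
Proof. by case: b => /=; rewrite finite_transl. Qed.

Definition clsg (b : bool) x c : Prop :=
  infinite_set (component x c) /\ forall u, component x c u -> Pf b (foil x u).

Lemma class_IIE x c : class_II x c <-> clsg true x c.
Proof. by []. Qed.
Lemma class_IFE x c : class_IF x c <-> clsg false x c.
Proof. by []. Qed.

Lemma clsg_shift b x : clsg b (Defs.shift x) 0 <-> clsg b x 1.
Proof.
have eC : component (Defs.shift x) 0 = [set v | component x 1 (v + 1)].
  by apply/seteqP; split => v /=; rewrite comp_shift add0r.
have eF : forall u, foil (Defs.shift x) u = [set v | foil x (u + 1) (v + 1)].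
  by move=> u; apply/seteqP; split => v /=; rewrite foil_shift.
rewrite /clsg eC finite_transl; split => -[h1 h2]; split => // u hu.
- have := h2 (u - 1); rewrite /= subrK => /(_ hu).
  by rewrite eF subrK Pf_transl.
- by rewrite eF Pf_transl; apply: h2.
Qed.

Lemma clsg_comp b x c c' : component x c c' -> clsg b x c -> clsg b x c'.
Proof. by move=> /comp_eq e; rewrite /clsg e. Qed.

Lemma comp01 x : recmap x 0 <> 0 -> component x 0 1.
Proof.
move=> h0.
have r0 : 0 < recmap x 0 by have := recmap_ge x 0; lia.
suff H : forall k : nat, forall j, 0 < j -> j <= recmap x 0 ->
    `|recmap x 0 - j|%N = k -> component x j (recmap x 0).
  apply: (comp_trans (v := recmap x 0)); first by apply: rt_step; left.
  apply: comp_sym; apply: (H _ 1 _ _ erefl) => //; lia.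
elim/ltn_ind => k IH j j0 jr ek.
have [e|ne] := eqVneq j (recmap x 0); first by rewrite e; exact: rt_refl.
have jr' : j < recmap x 0 by rewrite lt_neqAle ne.
have [a1 a2] := nest h0 j0 jr'.
apply: (comp_trans (v := recmap x j)).
  by apply: rt_step; left; split => //; lia.
apply: (IH `|recmap x 0 - recmap x j|%N) => //; lia.
Qed.

Lemma sep_adj x r u v : root x r -> rec_adj x u v -> (u <= r <-> v <= r).
Proof.
move=> hr.
have key : forall a, recmap x a <> a -> a <= r -> recmap x a <= r.
  move=> a ha ar; rewrite leNgt; apply/negP => c.
  have [e|ne] := eqVneq a r; first by apply: ha; rewrite e; exact: recmap_root.
  have ar' : a < r by rewrite lt_neqAle ne.
  have [c1 _] := nest ha ar' c.
  by move: c1; rewrite (recmap_root hr) ltxx.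
move=> [[h <-]|[h <-]].
- split; first exact: key.
  by move=> hv; have := recmap_ge x u; lia.
- split; last exact: key.
  by move=> hv; have := recmap_ge x v; lia.
Qed.

Lemma sep_comp x r u v : root x r -> component x u v -> (u <= r <-> v <= r).
Proof.
move=> hr; elim => {u v} [u v h|u|u v w _ h1 _ h2].
- exact: sep_adj h.
- by [].
- by rewrite h1.
Qed.

Lemma bounded_finite (S : set int) (N : nat) :
  (forall v, S v -> (`|v| <= N)%N) -> finite_set S.
Proof.
move=> hS.
pose s := [seq (n%:Z) | n <- iota 0 N.+1] ++ [seq - (n%:Z) | n <- iota 0 N.+1].
apply: (sub_finite_set _ (finite_seq s)) => v /hS hv /=.
rewrite mem_cat; apply/orP.
case: v hv => [n|n] hv.
- by left; apply/mapP; exists n => //; rewrite mem_iota /=; lia.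
- right; apply/mapP; exists n.+1; first by rewrite mem_iota /=; lia.
  by rewrite NegzE.
Qed.

Lemma finite_bounded (S : set int) : finite_set S ->
  exists N : nat, forall v, S v -> (`|v| <= N)%N.
Proof.
move=> /finite_seqP [s ->].
exists (foldr (fun v acc => `|v| + acc)%N 0%N s).
elim: s => [|a s IH] v //=; rewrite inE => /orP [/eqP ->|/IH]; lia.
Qed.

Lemma inf_unbounded (S : set int) :
  infinite_set S <-> forall N : nat, exists v, (N < `|v|)%N /\ S v.
Proof.
split.
- move=> hinf N; apply: contra_notP hinf => hN.
  apply: (bounded_finite (N := N)) => v Sv.
  rewrite leqNgt; apply/negP => c; apply: hN; by exists v.
- move=> h /finite_bounded [N hN].
  have [v [c Sv]] := h N.
  by have := hN v Sv; lia.
Qed.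

Lemma comp_finite x r1 r2 : root x r1 -> root x r2 -> r1 < 0 -> 0 <= r2 ->
  finite_set (component x 0).
Proof.
move=> h1 h2 n1 n2.
apply: (bounded_finite (N := (`|r1| + `|r2|)%N)) => v hv.
have := sep_comp h1 hv; have := sep_comp h2 hv.
lia.
Qed.

Definition seqZ := (int -> int)%type.
HB.instance Definition _ := Choice.on seqZ.
HB.instance Definition _ := isPointed.Build seqZ (fun _ => 0).
Definition cyl : set (set seqZ) := cylinders.
Notation M := (g_sigma_algebraType cyl).
Definition msP (p : (int -> int) -> Prop) := measurable ([set x : M | p x]).

Lemma msP_ext p q : (forall x, p x <-> q x) -> msP p -> msP q.
Proof.
move=> h; rewrite /msP.
by have -> : [set x : M | q x] = [set x | p x] by apply/seteqP; split => x /=; rewrite h.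
Qed.

Lemma msP_cyl n a : msP (fun x => x n = a).
Proof. by apply: sub_sigma_algebra; exists n, a. Qed.

Lemma msP_and p q : msP p -> msP q -> msP (fun x => p x /\ q x).
Proof. by move=> hp hq; exact: measurableI hp hq. Qed.

Lemma msP_or p q : msP p -> msP q -> msP (fun x => p x \/ q x).
Proof. by move=> hp hq; exact: measurableU hp hq. Qed.

Lemma msP_not p : msP p -> msP (fun x => ~ p x).
Proof. by move=> hp; exact: measurableC hp. Qed.

Lemma msP_ex (I : countType) (p : I -> (int -> int) -> Prop) :
  (forall i, msP (p i)) -> msP (fun x => exists i, p i x).
Proof.
move=> hp; rewrite /msP.
have -> : [set x : M | exists i, p i x] = \bigcup_i [set x : M | p i x].
  by apply/seteqP; split => x /=; move=> [i h]; exists i.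
apply: countable_bigcupT_measurable => //; exact: countableP.
Qed.

Lemma msP_all (I : countType) (p : I -> (int -> int) -> Prop) :
  (forall i, msP (p i)) -> msP (fun x => forall i, p i x).
Proof.
move=> hp; apply: (msP_ext (p := fun x => ~ exists i, ~ p i x)).
  move=> x; split; last by move=> h [i]; apply.
  by move=> h i; apply: contra_notP h => c; exists i.
by apply: msP_not; apply: msP_ex => i; apply: msP_not.
Qed.

Lemma msP_const (P : Prop) : msP (fun _ => P).
Proof.
rewrite /msP; have [h|h] := pselect P.
- by have -> : [set _ : M | P] = setT by apply/seteqP; split.
- by have -> : [set _ : M | P] = set0 by apply/seteqP; split.
Qed.

Lemma msP_imp p q : msP p -> msP q -> msP (fun x => p x -> q x).
Proof.
move=> hp hq; apply: (msP_ext (p := fun x => ~ p x \/ q x)); last exact: msP_or (msP_not hp) hq.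
move=> x; split; first by case.
by move=> h; have [/h|] := pselect (p x); [right|left].
Qed.

Lemma msP_sum (k : nat) a c : msP (fun x => \sum_(0 <= t < k) x (a + t%:Z) = c).
Proof.
elim: k c => [|k IH] c.
  by apply: (msP_ext (p := fun _ => 0 = c)) => [x|]; [rewrite big_geq|exact: msP_const].
apply: (msP_ext (p := fun x => exists c1, \sum_(0 <= t < k) x (a + t%:Z) = c1 /\ x (a + k%:Z) = c - c1)).
  move=> x; rewrite big_nat_recr //=; split.
  - by move=> [c1 [<- ->]]; rewrite addrC subrK.
  - by move=> <-; eexists; split; first reflexivity; rewrite addrC addrK.
by apply: msP_ex => c1; apply: msP_and; [exact: IH|exact: msP_cyl].
Qed.

Lemma msP_ysum i n c : msP (fun x => ysum x i n = c).
Proof. exact: msP_sum. Qed.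

Lemma msP_ysum_lt0 i n : msP (fun x => ysum x i n < 0).
Proof.
apply: (msP_ext (p := fun x => exists c : int, (c < 0) /\ ysum x i n = c)).
  by move=> x; split; [move=> [c [h ->]]|move=> h; exists (ysum x i n)].
by apply: msP_ex => c; apply: msP_and; [exact: msP_const|exact: msP_ysum].
Qed.

Lemma msP_ysum_ge0 i n : msP (fun x => 0 <= ysum x i n).
Proof.
apply: (msP_ext (p := fun x => ~ (ysum x i n < 0))); last by apply: msP_not; exact: msP_ysum_lt0.
by move=> x; rewrite ltNge; case: (0 <= ysum x i n); split => // h; exfalso; exact: h.
Qed.

Lemma msP_root i : msP (fun x => root x i).
Proof.
apply: msP_all => n; apply: msP_imp; [exact: msP_const|exact: msP_ysum_lt0].
Qed.

Lemma msP_first i v : msP (fun x => first_record x i v).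
Proof.
apply: msP_and; first exact: msP_const.
apply: msP_and; first exact: msP_ysum_ge0.
apply: msP_all => m; apply: msP_imp; first exact: msP_const.
apply: msP_imp; [exact: msP_const|exact: msP_ysum_lt0].
Qed.

Lemma msP_recmap i v : msP (fun x => recmap x i = v).
Proof.
apply: (msP_ext (p := fun x => (v = i /\ root x i) \/ first_record x i v)).
  move=> x; split.
  - by move=> [[-> /recmap_root]|/recmap_first].
  - by move=> <-; case: (root_or_first x i) => h; [left; rewrite recmap_root|right].
by apply: msP_or; [apply: msP_and; [exact: msP_const|exact: msP_root]|exact: msP_first].
Qed.

Lemma msP_iter m u v : msP (fun x => iter m (recmap x) u = v).
Proof.
elim: m v => [|m IH] v /=; first exact: msP_const.
apply: (msP_ext (p := fun x => exists w, iter m (recmap x) u = w /\ recmap x w = v)).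
  by move=> x; split; [move=> [w [-> ->]]|move=> <-; eexists; split].
by apply: msP_ex => w; apply: msP_and; [exact: IH|exact: msP_recmap].
Qed.

Lemma msP_meetiter m n u v : msP (fun x => iter m (recmap x) u = iter n (recmap x) v).
Proof.
apply: (msP_ext (p := fun x => exists w, iter m (recmap x) u = w /\ iter n (recmap x) v = w)).
  by move=> x; split; [move=> [w [-> ->]]|move=> ->; eexists; split].
by apply: msP_ex => w; apply: msP_and; exact: msP_iter.
Qed.

Lemma msP_comp u v : msP (fun x => component x u v).
Proof.
apply: (msP_ext (p := fun x => meet x u v)); first by move=> x; rewrite componentE.
by apply: msP_ex => m; apply: msP_ex => n; exact: msP_meetiter.
Qed.

Lemma msP_foil u v : msP (fun x => foil x u v).
Proof.
apply: msP_and; first exact: msP_comp.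
apply: msP_ex => n; apply: msP_and; [exact: msP_const|exact: msP_meetiter].
Qed.

Lemma msP_inf (q : (int -> int) -> int -> Prop) :
  (forall v, msP (fun x => q x v)) -> msP (fun x => infinite_set (q x)).
Proof.
move=> hq.
apply: (msP_ext (p := fun x => forall N : nat, exists v, (N < `|v|)%N /\ q x v)).
  by move=> x; rewrite inf_unbounded.
by apply: msP_all => N; apply: msP_ex => v; apply: msP_and; [exact: msP_const|exact: hq].
Qed.

Lemma msP_Pf b u : msP (fun x => Pf b (foil x u)).
Proof.
case: b => /=; first by apply: msP_inf => v; exact: msP_foil.
apply: (msP_ext (p := fun x => ~ infinite_set (foil x u))).
  by move=> x; split; [move=> /contrapT|move=> h /(_ h)].
by apply: msP_not; apply: msP_inf => v; exact: msP_foil.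
Qed.

Lemma msP_clsg b c : msP (fun x => clsg b x c).
Proof.
apply: msP_and; first by apply: msP_inf => v; exact: msP_comp.
apply: msP_all => u; apply: msP_imp; [exact: msP_comp|exact: msP_Pf].
Qed.

Definition Gs : set seqZ := [set x | forall i, ~ root x i].
Definition Us (k : int) : set seqZ := [set x | exists i, k <= i /\ root x i].
Definition Ls (k : int) : set seqZ := [set x | exists i, i < k /\ root x i].
Definition Ss (b : bool) : set seqZ := [set x | clsg b x 0].
Definition Fb (n : nat) : set seqZ :=
  if odd n then Us (- (n./2)%:Z - 1) `\` Us (- (n./2)%:Z - 1 + 1)
  else Ls ((n./2)%:Z + 1) `\` Ls (n./2)%:Z.

Lemma msP_Gs : msP Gs.
Proof. by apply: msP_all => i; apply: msP_not; exact: msP_root. Qed.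
Lemma msP_Us k : msP (Us k).
Proof. by apply: msP_ex => i; apply: msP_and; [exact: msP_const|exact: msP_root]. Qed.
Lemma msP_Ls k : msP (Ls k).
Proof. by apply: msP_ex => i; apply: msP_and; [exact: msP_const|exact: msP_root]. Qed.
Lemma msP_Ss b : msP (Ss b).
Proof. exact: msP_clsg. Qed.
Lemma msP_Fb n : msP (Fb n).
Proof.
rewrite /Fb; case: odd; apply: msP_and; (try apply: msP_not);
  solve [exact: msP_Us|exact: msP_Ls].
Qed.
Lemma msP_SG b : msP (Ss b `&` Gs).
Proof. exact: msP_and (msP_Ss b) msP_Gs. Qed.

Lemma Gs_shift x : Gs (Defs.shift x) <-> Gs x.
Proof.
split => h i.
- by rewrite -(subrK 1 i) -root_shift; apply: h.
- by rewrite root_shift; apply: h.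
Qed.

Lemma Us_shift k : Defs.shift @^-1` Us k = Us (k + 1).
Proof.
apply/seteqP; split => x /= [i [ki hi]].
- by exists (i + 1); split; [lia|rewrite -root_shift].
- by exists (i - 1); split; [lia|rewrite root_shift subrK].
Qed.

Lemma Ls_shift k : Defs.shift @^-1` Ls k = Ls (k + 1).
Proof.
apply/seteqP; split => x /= [i [ki hi]].
- by exists (i + 1); split; [lia|rewrite -root_shift].
- by exists (i - 1); split; [lia|rewrite root_shift subrK].
Qed.

Lemma SG_shift b : Defs.shift @^-1` (Ss b `&` Gs) = Ss b `&` Gs.
Proof.
apply/seteqP; split => x /= [h1 h2].
- have g : Gs x by rewrite -Gs_shift.
  split => //; rewrite /Ss /=.
  have c01 : component x 0 1 by apply: comp01 => /recmap_fix; apply: g.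
  apply: (clsg_comp (comp_sym c01)); exact/clsg_shift.
- split; last by rewrite Gs_shift.
  have c01 : component x 0 1 by apply: comp01 => /recmap_fix; apply: h2.
  apply/clsg_shift; exact: (clsg_comp c01).
Qed.

Lemma bad_cover b x : clsg b x 0 -> ~ Gs x -> exists n, Fb n x.
Proof.
move=> [hinf _] /existsNP [r /contrapT hr].
have [[r2 [r2p hr2]] | nr2] := pselect (exists r2, 0 <= r2 /\ root x r2);
have [[r1 [r1n hr1]] | nr1] := pselect (exists r1, r1 < 0 /\ root x r1).
- by exfalso; apply: hinf; exact: comp_finite hr1 hr2 r1n r2p.
-
  pose Q := fun m : nat => `[< root x m%:Z >].
  have hQ : exists m, Q m.
    by exists `|r2|%N; apply/asboolP; have -> : (`|r2|%N : int) = r2 by lia.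
  pose m := ex_minn hQ.
  have Qm : root x m%:Z by apply/asboolP; rewrite /m; case: ex_minnP.
  have mmin : forall k, Q k -> (m <= k)%N by rewrite /m; case: ex_minnP.
  exists m.*2; rewrite /Fb odd_double half_double; split.
  + by exists m%:Z; split => //; lia.
  + move=> [j [jm hj]].
    have j0 : 0 <= j by rewrite leNgt; apply/negP => c; apply: nr1; exists j.
    have := mmin `|j|%N; rewrite /Q; have -> : (`|j|%N : int) = j by lia.
    by move=> /(_ (asboolT hj)); lia.
-
  pose Q := fun m : nat => `[< root x (- m%:Z - 1) >].
  have hQ : exists m, Q m.
    exists `|r1|.-1; apply/asboolP; have -> : - (`|r1|.-1 : int) - 1 = r1 by lia.
    done.
  pose m := ex_minn hQ.
  have Qm : root x (- m%:Z - 1) by apply/asboolP; rewrite /m; case: ex_minnP.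
  have mmin : forall k, Q k -> (m <= k)%N by rewrite /m; case: ex_minnP.
  exists m.*2.+1; rewrite /Fb /= odd_double /= uphalf_double; split.
  + by exists (- m%:Z - 1); split => //.
  + move=> [j [jm hj]].
    have j0 : j < 0 by rewrite ltNge; apply/negP => c; apply: nr2; exists j.
    have := mmin `|j|.-1; rewrite /Q; have -> : - (`|j|.-1 : int) - 1 = j by lia.
    by move=> /(_ (asboolT hj)); lia.
- by exfalso; apply: nr1; exists r; split => //; rewrite ltNge; apply/negP => c; apply: nr2; exists r.
Qed.

Section Prob.
Variables (R : realType) (d : measure_display) (T : measurableType d)
  (P : probability T R) (X : T -> int -> int).
Hypothesis hX : int_process X.
Hypothesis hstat : stationary P X.
Hypothesis herg : ergodic P X.

Lemma mX (A : set seqZ) : msP A -> measurable (X @^-1` A).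
Proof.
move=> mA.
have mf : measurable_fun setT (X : T -> M).
  apply: (@measurability _ _ T M setT X cyl erefl).
  move=> _ [B [n [a ->]] <-].
  rewrite setTI; exact: hX n a.
by have := mf measurableT A mA; rewrite setTI.
Qed.

Lemma finP (A : set T) : measurable A -> P A \is a fin_num.
Proof.
move=> mA; rewrite ge0_fin_numE ?measure_ge0 //.
exact: le_lt_trans (probability_le1 P mA) (ltry 1).
Qed.

Lemma null_diff (A B : set seqZ) : msP A -> msP B -> B `<=` A ->
  P (X @^-1` A) = P (X @^-1` B) -> P (X @^-1` (A `\` B)) = 0%E.
Proof.
move=> mA mB BA e.
have := measureDI P (mX mA) (mX mB).
rewrite setIidr; last by move=> w /= /BA.
move=> e'.
have e2 : P (X @^-1` B) = (P (X @^-1` A `\` X @^-1` B) + P (X @^-1` B))%E.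
  exact: etrans (esym e) e'.
have -> : X @^-1` (A `\` B) = X @^-1` A `\` X @^-1` B by [].
rewrite -(addeK (P (X @^-1` A `\` X @^-1` B)) (finP (mX mB))).
by rewrite -e2 subee //; apply: finP; exact: mX.
Qed.

Lemma null_Fb n : P (X @^-1` Fb n) = 0%E.
Proof.
rewrite /Fb; case: odd.
- apply: null_diff; [exact: msP_Us|exact: msP_Us| |].
  + by move=> x [i [ki hi]]; exists i; split => //; lia.
  + by rewrite -Us_shift hstat //; exact: msP_Us.
- apply: null_diff; [exact: msP_Ls|exact: msP_Ls| |].
  + by move=> x [i [ki hi]]; exists i; split => //; lia.
  + by rewrite -Ls_shift hstat //; exact: msP_Ls.
Qed.

Lemma null_cover (A : set T) (F : nat -> set T) : measurable A ->
  (forall n, measurable (F n)) -> (forall n, P (F n) = 0%E) ->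
  A `<=` \bigcup_n F n -> P A = 0%E.
Proof.
move=> mA mF F0 sub; apply/eqP; rewrite eq_le measure_ge0 andbT.
apply: le_trans (measure_sigma_subadditive P mF mA sub) _.
by rewrite eseries0 // => i _ _; exact: F0.
Qed.

Lemma main01 b : P (X @^-1` Ss b) = 0%E \/ P (X @^-1` Ss b) = 1%E.
Proof.
have e : P (X @^-1` Ss b) = (P (X @^-1` Ss b `\` X @^-1` Gs) + P (X @^-1` Ss b `&` X @^-1` Gs))%E :=
  measureDI P (mX (msP_Ss b)) (mX msP_Gs).
have z : P (X @^-1` Ss b `\` X @^-1` Gs) = 0%E.
  apply: (null_cover (F := fun n => X @^-1` Fb n)).
  - by apply: measurableD; apply: mX; [exact: msP_Ss|exact: msP_Gs].
  - by move=> n; apply: mX; exact: msP_Fb.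
  - exact: null_Fb.
  - by move=> w [h1 h2]; have [n hn] := bad_cover h1 h2; exists n.
rewrite e z add0e -preimage_setI.
apply: herg; [exact: msP_SG|exact: SG_shift].
Qed.

End Prob.

Unset Implicit Arguments.
Set Strict Implicit.

Theorem proposition3p1 (R : realType) (d : measure_display) (T : measurableType d)
  (P : probability T R) (X : T -> int -> int)
  (hX : int_process X) (hstat : stationary P X) (herg : ergodic P X) :
  (P [set w | class_II (X w) 0] = 0%E \/ P [set w | class_II (X w) 0] = 1%E) /\
  (P [set w | class_IF (X w) 0] = 0%E \/ P [set w | class_IF (X w) 0] = 1%E).
Proof.
split.
- exact: (main01 hX hstat herg true).
- exact: (main01 hX hstat herg false).
Qed.
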